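(* Let $r\ge1$ and let $(a_n)_{n\ge1}$ be any sequence of non-negative real numbers with $\lim_{n\to\infty}a_n=0$. Then there exists $\mu\in\mathcal P_r$ such that $d_r(\delta^{\bullet,n}_\bullet,\mu)\ge a_n$ for every $n\in\mathbb N$.
   Context: $\mathcal P$ denotes the set of Borel probability measures on $\mathbb R$; $\mathcal P_r=\{\mu\in\mathcal P:\int|x|^r{\rm d}\mu(x)<\infty\}$. For $\mu\in\mathcal P$, $F_\mu(x)=\mu(]-\infty,x])$ and $F_\mu^{-1}(t)=\sup\{x: F_\mu(x)\le t\}$, $t\in]0,1[$. $d_r(\mu,\nu)=\big(\int_0^1|F_\mu^{-1}(t)-F_\nu^{-1}(t)|^r{\rm d}t\big)^{1/r}$ on $\mathcal P_r$. With $\Xi_n=\{\mathbf x\in\mathbb R^n:x_1\le\dots\le x_n\}$, $\Pi_n=\{\mathbf p\in\mathbb R^n:p_i\ge0,\sum_ip_i=1\}$ and $\delta^{\mathbf p}_{\mathbf x}=\sum_ip_i\delta_{x_i}$, set $d_r(\delta^{\bullet,n}_\bullet,\mu)=\min_{\mathbf x\in\Xi_n,\mathbf p\in\Pi_n}d_r(\delta^{\mathbf p}_{\mathbf x},\mu)$, the error of a best (unconstrained) $n$-point $r$-approximation (the minimum is attained). *)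

(* Defs.v *)
From Stdlib Require Import Reals Lra ClassicalEpsilon.
Open Scope R_scope.

(* Supremum of a set of reals (classical choice; arbitrary if no lub exists). *)
Definition Rsup (E : R -> Prop) : R :=
  epsilon (inhabits 0) (fun s => is_lub E s).

Definition rpow (x s : R) : R := if Rle_dec x 0 then 0 else Rpower x s.

Fixpoint sumR (n : nat) (f : nat -> R) : R :=
  match n with
  | O => 0
  | S m => sumR m f + f m
  end.

(* A Borel probability measure on R is represented by its distribution
   function F_mu (bijective correspondence). *)
Definition is_cdf (F : R -> R) : Prop :=
  (forall x y, x <= y -> F x <= F y) /\
  (forall x eps, 0 < eps -> exists d, 0 < d /\
      forall y, x <= y -> y < x + d -> F y - F x < eps) /\
  (forall eps, 0 < eps -> exists M, forall x, x <= M -> F x < eps) /\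
  (forall eps, 0 < eps -> exists M, forall x, M <= x -> 1 - F x < eps).

Definition quantile (F : R -> R) (t : R) : R := Rsup (fun x => F x <= t).

(* Integral over ]0,1[ of a nonnegative function, as the supremum of its
   Riemann integrals over compact subintervals [a,b] of ]0,1[. *)
Definition int01_set (f : R -> R) (J : R) : Prop :=
  exists a b (pr : Riemann_integrable f a b),
    0 < a /\ a <= b /\ b < 1 /\ RiemannInt pr = J.

Definition int01 (f : R -> R) : R := Rsup (int01_set f).

Definition int01_finite (f : R -> R) : Prop :=
  exists M, forall J, int01_set f J -> J <= M.

(* mu in P_r : int |x|^r dmu < oo, i.e. int_0^1 |F^{-1}(t)|^r dt < oo. *)
Definition in_Pr (r : R) (F : R -> R) : Prop :=
  is_cdf F /\ int01_finite (fun t => rpow (Rabs (quantile F t)) r).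

Definition d_r (r : R) (F G : R -> R) : R :=
  rpow (int01 (fun t => rpow (Rabs (quantile F t - quantile G t)) r)) (/ r).

(* Xi_n and Pi_n; vectors in R^n are functions nat -> R read on i < n. *)
Definition in_Xi (n : nat) (x : nat -> R) : Prop :=
  forall i j, (i <= j)%nat -> (j < n)%nat -> x i <= x j.

Definition in_Pi (n : nat) (p : nat -> R) : Prop :=
  (forall i, (i < n)%nat -> 0 <= p i) /\ sumR n p = 1.

(* Distribution function of delta_x^p = sum_i p_i delta_{x_i}. *)
Definition disc_cdf (n : nat) (x p : nat -> R) (t : R) : R :=
  sumR n (fun i => if Rle_dec (x i) t then p i else 0).

(* Main.v *)
Require Import Defs.
From Stdlib Require Import Reals.
From Stdlib Require Import Lra Lia ZArith Classical ClassicalEpsilon FunctionalExtensionality PropExtensionality List.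
From Coquelicot Require Hierarchy RInt.
Open Scope R_scope.

Lemma sumR_ext n f g : (forall i, (i<n)%nat -> f i = g i) -> sumR n f = sumR n g.
Proof. induction n; intros H; simpl; auto. rewrite IHn, H; auto; intros; apply H; lia. Qed.
Lemma sumR_le n f g : (forall i, (i<n)%nat -> f i <= g i) -> sumR n f <= sumR n g.
Proof. induction n; intros H; simpl. lra. assert (f n <= g n) by (apply H; lia).
 assert (sumR n f <= sumR n g) by (apply IHn; intros; apply H; lia). lra. Qed.
Lemma sumR_nonneg n f : (forall i, (i<n)%nat -> 0 <= f i) -> 0 <= sumR n f.
Proof. intros H. replace 0 with (sumR n (fun _ => 0)). apply sumR_le; auto.
 induction n; simpl; auto. rewrite IHn. lra. intros; apply H; lia. Qed.
Lemma sumR_plus n f g : sumR n (fun i => f i + g i) = sumR n f + sumR n g.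
Proof. induction n; simpl; [lra|]. rewrite IHn; lra. Qed.
Lemma sumR_minus n f g : sumR n (fun i => f i - g i) = sumR n f - sumR n g.
Proof. induction n; simpl; [lra|]. rewrite IHn; lra. Qed.
Lemma sumR_scal n c f : sumR n (fun i => c * f i) = c * sumR n f.
Proof. induction n; simpl; [lra|]. rewrite IHn; lra. Qed.
Lemma sumR_const n c : sumR n (fun _ => c) = INR n * c.
Proof. induction n; simpl sumR; [simpl; lra|]. rewrite IHn, S_INR; lra. Qed.
Lemma sumR_split m l f : sumR (m + l) f = sumR m f + sumR l (fun i => f (m + i)%nat).
Proof. induction l; simpl. rewrite Nat.add_0_r; lra. rewrite Nat.add_succ_r. simpl. rewrite IHl. lra. Qed.
Lemma sumR_swap n m (f : nat -> nat -> R) :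
  sumR n (fun i => sumR m (fun j => f i j)) = sumR m (fun j => sumR n (fun i => f i j)).
Proof. induction n; simpl. induction m; simpl; lra.
 rewrite IHn. rewrite <- sumR_plus. reflexivity. Qed.
Lemma sumR_term n f i : (i < n)%nat -> (forall j, (j<n)%nat -> 0 <= f j) -> f i <= sumR n f.
Proof. induction n; intros Hi H; [lia|]. simpl.
 destruct (Nat.eq_dec i n). subst. assert (0 <= sumR n f) by (apply sumR_nonneg; intros; apply H; lia). lra.
 assert (f i <= sumR n f) by (apply IHn; [lia| intros; apply H; lia]). assert (0 <= f n) by (apply H; lia). lra. Qed.
Lemma sumR_shift K f : sumR (S K) f = f 0%nat + sumR K (fun k => f (S k)).
Proof. induction K; simpl; [lra|]. simpl in IHK. rewrite IHK. lra. Qed.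
Lemma sumR_mono n m f : (n <= m)%nat -> (forall j, 0 <= f j) -> sumR n f <= sumR m f.
Proof. intros H Hf. replace m with (n + (m - n))%nat by lia. rewrite sumR_split.
 assert (0 <= sumR (m-n) (fun i => f (n+i)%nat)) by (apply sumR_nonneg; auto). lra. Qed.

Lemma Rsup_lub E : bound E -> (exists x, E x) -> is_lub E (Rsup E).
Proof. intros Hb Hn. unfold Rsup. apply epsilon_spec. destruct (completeness E Hb Hn) as [m Hm]. eauto. Qed.

Lemma Rsup_ext E1 E2 : (forall x, E1 x <-> E2 x) -> Rsup E1 = Rsup E2.
Proof. intros H. f_equal. apply functional_extensionality. intros x. apply propositional_extensionality. auto. Qed.

Lemma rpow_ge0 x s : 0 <= rpow x s.
Proof. unfold rpow. destruct (Rle_dec x 0). lra. unfold Rpower. left; apply exp_pos. Qed.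
Lemma rpow_pos x s : 0 < x -> rpow x s = Rpower x s.
Proof. intros. unfold rpow. destruct (Rle_dec x 0); [lra|auto]. Qed.
Lemma rpow_gt0 x s : 0 < x -> 0 < rpow x s.
Proof. intros. rewrite rpow_pos; auto. unfold Rpower; apply exp_pos. Qed.
Lemma rpow_le x y s : 0 <= s -> 0 <= x <= y -> rpow x s <= rpow y s.
Proof. intros Hs [H1 H2]. unfold rpow at 1. destruct (Rle_dec x 0). apply rpow_ge0.
 rewrite rpow_pos by lra. apply Rle_Rpower_l; lra. Qed.
Lemma rpow_mult x y s : 0 < x -> 0 < y -> rpow (x*y) s = rpow x s * rpow y s.
Proof. intros. rewrite !rpow_pos; try nra. rewrite Rpower_mult_distr; auto. Qed.
Lemma rpow_inv x r : 0 < x -> 0 < r -> rpow (rpow x r) (/ r) = x.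
Proof. intros. rewrite (rpow_pos x) by auto. rewrite rpow_pos by (unfold Rpower; apply exp_pos).
 rewrite Rpower_mult, Rinv_r by lra. apply Rpower_1; auto. Qed.
Lemma rpow_le_self x r : 0 <= x <= 1 -> 1 <= r -> rpow x r <= x.
Proof. intros Hx Hr. unfold rpow. destruct (Rle_dec x 0). lra.
 unfold Rpower. assert (ln x <= 0). { rewrite <- ln_1. destruct (Req_dec x 1). subst; lra. left; apply ln_increasing; lra. }
 rewrite <- (exp_ln x) at 2 by lra. destruct (Req_dec (r * ln x) (ln x)). rewrite H0; lra.
 left. apply exp_increasing. nra. Qed.
Lemma rpow_add u v r : 0 <= u -> 0 <= v -> 0 < r -> rpow (u+v) r <= Rpower 2 r * (rpow u r + rpow v r).
Proof. intros Hu Hv Hr. assert (Hm : rpow (u+v) r <= rpow (2 * Rmax u v) r).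
 { apply rpow_le. lra. split. lra. unfold Rmax; destruct (Rle_dec u v); lra. }
 destruct (Req_dec (Rmax u v) 0). assert (u + v = 0) by (unfold Rmax in *; destruct (Rle_dec u v); lra).
 rewrite H0. unfold rpow at 1. destruct (Rle_dec 0 0); [|lra]. assert (0 < Rpower 2 r) by (unfold Rpower; apply exp_pos).
 pose proof (rpow_ge0 u r); pose proof (rpow_ge0 v r). nra.
 assert (0 < Rmax u v) by (unfold Rmax in *; destruct (Rle_dec u v); lra).
 rewrite rpow_mult in Hm by lra. rewrite (rpow_pos 2) in Hm by lra.
 assert (rpow (Rmax u v) r <= rpow u r + rpow v r).
 { pose proof (rpow_ge0 u r); pose proof (rpow_ge0 v r). unfold Rmax; destruct (Rle_dec u v); lra. }
 assert (0 < Rpower 2 r) by (unfold Rpower; apply exp_pos). nra. Qed.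

Module CQ.
Import Coquelicot.Hierarchy.
Lemma const_int (f : R -> R) a b c : (forall x, Rmin a b < x < Rmax a b -> c = f x) -> Riemann_integrable f a b.
Proof. intros H. apply Coquelicot.RInt.ex_RInt_Reals_0.
apply (Coquelicot.RInt.ex_RInt_ext (fun _ => c)). exact H. apply (Coquelicot.RInt.ex_RInt_const (V:=R_NormedModule)). Qed.
End CQ.

Lemma step_int (f : R -> R) (L : list R) : forall a b, a <= b ->
  (forall t u, a < t -> t < u -> u < b -> (forall s, In s L -> s < t \/ u < s) -> f t = f u) ->
  Riemann_integrable f a b.
Proof.
  induction L as [|s L IH]; intros a b Hab H.
  - destruct (Req_EM_T a b) as [<-|Hne]. apply RiemannInt_P7.
    apply (CQ.const_int f a b (f ((a+b)/2))). rewrite Rmin_left, Rmax_right by lra.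
    intros x Hx. destruct (Rtotal_order x ((a+b)/2)) as [Hl|[He|Hg]].
    + symmetry; apply H; try lra. intros s [].
    + subst; auto.
    + apply H; try lra. intros s [].
  - destruct (Rlt_dec a s) as [Has|Has]; [destruct (Rlt_dec s b) as [Hsb|Hsb]|].
    + apply RiemannInt_P24 with s.
      * apply IH. lra. intros t u H1 H2 H3 H4. apply H; try lra. intros s' [<-|Hs']. right; lra. auto.
      * apply IH. lra. intros t u H1 H2 H3 H4. apply H; try lra. intros s' [<-|Hs']. left; lra. auto.
    + apply IH; auto. intros t u H1 H2 H3 H4. apply H; auto. intros s' [<-|Hs']. right; lra. auto.
    + apply IH; auto. intros t u H1 H2 H3 H4. apply H; auto. intros s' [<-|Hs']. left; lra. auto.
Qed.

Lemma int_const_le (f : R -> R) a b v (pr : Riemann_integrable f a b) : a <= b ->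
  (forall t, a < t < b -> v <= f t) -> v * (b - a) <= RiemannInt pr.
Proof. intros Hab H. rewrite <- (RiemannInt_P15 (RiemannInt_P14 a b v)).
  apply RiemannInt_P19; auto. Qed.
Lemma int_le_const (f : R -> R) a b v (pr : Riemann_integrable f a b) : a <= b ->
  (forall t, a < t < b -> f t <= v) -> RiemannInt pr <= v * (b - a).
Proof. intros Hab H. rewrite <- (RiemannInt_P15 (RiemannInt_P14 a b v)).
  apply RiemannInt_P19; auto. Qed.

Lemma int_lower (f : R -> R) (c U : nat -> R) P : (forall k, c k <= c (S k)) ->
  forall L, (forall a b, c P <= a -> a <= b -> b <= c (P+L)%nat -> Riemann_integrable f a b) ->
  (forall i, (i < L)%nat -> forall t, c (P+i)%nat < t < c (P+i+1)%nat -> U i <= f t) ->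
  forall b (pr : Riemann_integrable f (c P) b), b = c (P+L)%nat ->
  sumR L (fun i => U i * (c (P+i+1)%nat - c (P+i)%nat)) <= RiemannInt pr.
Proof.
  intros Hc. assert (Hmono : forall k l, (k <= l)%nat -> c k <= c l).
  { intros k l Hkl. induction Hkl. lra. pose proof (Hc m); lra. }
  induction L as [|L IHL]; intros Hint HU b pr Hb.
  - rewrite Nat.add_0_r in Hb. subst b. rewrite RiemannInt_P9. simpl; lra.
  - simpl sumR.
    assert (H1 : Riemann_integrable f (c P) (c (P+L)%nat)).
    { apply Hint. lra. apply Hmono; lia. apply Hmono; lia. }
    assert (H2 : Riemann_integrable f (c (P+L)%nat) b).
    { apply Hint. apply Hmono; lia. subst b; apply Hmono; lia. lra. }
    rewrite <- (RiemannInt_P26 H1 H2 pr).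
    assert (A1 : sumR L (fun i => U i * (c (P+i+1)%nat - c (P+i)%nat)) <= RiemannInt H1).
    { apply IHL; auto. intros a' b' h1 h2 h3. apply Hint; auto. apply Rle_trans with (1:=h3). apply Hmono; lia.
 }
    assert (Hb' : b = c (P + L + 1)%nat) by (subst b; f_equal; lia).
    assert (A2 : U L * (b - c (P+L)%nat) <= RiemannInt H2).
    { apply int_const_le. subst b; apply Hmono; lia. intros t Ht. apply HU. lia. rewrite <- Hb'. auto. }
    rewrite <- Hb'. lra.
Qed.

Lemma int_upper (f : R -> R) (c V : nat -> R) : (forall k, c k <= c (S k)) -> (forall k, 0 <= V k) ->
  forall K a b, c 0%nat <= a -> a <= b -> b <= c K ->
  (forall a' b', a <= a' -> a' <= b' -> b' <= b -> Riemann_integrable f a' b') ->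
  (forall k, (k < K)%nat -> forall t, c k < t < c (S k) -> a < t < b -> f t <= V k) ->
  forall pr : Riemann_integrable f a b, RiemannInt pr <= sumR K (fun k => V k * (c (S k) - c k)).
Proof.
  intros Hc HV. assert (Hmono : forall k l, (k <= l)%nat -> c k <= c l).
  { intros k l Hkl. induction Hkl. lra. pose proof (Hc m); lra. }
  assert (Hpos : forall K, 0 <= sumR K (fun k => V k * (c (S k) - c k))).
  { intros K; apply sumR_nonneg; intros i _. pose proof (HV i); pose proof (Hc i); nra. }
  induction K as [|K IHK]; intros a b Ha Hab Hb Hint HB pr.
  - assert (b = a) by lra. subst b. rewrite RiemannInt_P9. simpl; lra.
  - simpl sumR. pose proof (HV K); pose proof (Hc K).
    destruct (Rle_dec b (c K)) as [HbK|HbK].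
    + assert (RiemannInt pr <= sumR K (fun k => V k * (c (S k) - c k))).
      { apply IHK; auto; intros k hk; apply HB; lia. }
      nra.
    + destruct (Rle_dec a (c K)) as [HaK|HaK].
      * assert (H1 : Riemann_integrable f a (c K)) by (apply Hint; lra).
        assert (H2 : Riemann_integrable f (c K) b) by (apply Hint; lra).
        rewrite <- (RiemannInt_P26 H1 H2 pr).
        assert (RiemannInt H1 <= sumR K (fun k => V k * (c (S k) - c k))).
        { apply IHK; try lra. intros; apply Hint; lra. intros k hk t Ht Ht'; apply HB; try lia; lra. }
        assert (RiemannInt H2 <= V K * (b - c K)).
        { apply int_le_const. lra. intros t Ht. apply HB. lia. lra. lra. }
        nra.
      * assert (RiemannInt pr <= V K * (b - a)).
        { apply int_le_const. lra. intros t Ht. apply HB. lia. lra. lra. }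
        pose proof (Hpos K). nra.
Qed.

Lemma quantile_lub F t : (exists z, F z <= t) -> (exists M, forall z, M <= z -> t < F z) ->
  is_lub (fun x => F x <= t) (quantile F t).
Proof. intros [z0 Hz0] [M HM]. apply Rsup_lub. exists M. intros z Hz.
  destruct (Rle_dec z M); auto. assert (t < F z) by (apply HM; lra). lra. eauto. Qed.

Lemma quantile_bounds F t lo hi : (forall z, z < lo -> F z <= t) -> (forall z, hi <= z -> t < F z) ->
  lo <= quantile F t <= hi.
Proof. intros Hlo Hhi. assert (Hl : is_lub (fun x => F x <= t) (quantile F t)).
  { apply quantile_lub. exists (lo - 1). apply Hlo; lra. eauto. }
  destruct Hl as [Hub Hleast]. split.
  - destruct (Rle_dec lo (quantile F t)); auto. exfalso.
    assert (F ((quantile F t + lo)/2) <= t) by (apply Hlo; lra).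
    assert (((quantile F t + lo)/2) <= quantile F t) by (apply Hub; auto). lra.
  - apply Hleast. intros z Hz. destruct (Rle_dec z hi); auto. assert (t < F z) by (apply Hhi; lra). lra.
Qed.

Lemma quantile_piece F t y al be : (forall z, z < y -> F z <= al) -> (forall z, y <= z -> be <= F z) ->
  al <= t -> t < be -> quantile F t = y.
Proof. intros H1 H2 H3 H4. apply Rle_antisym.
  - apply (proj2 (quantile_bounds F t y y (fun z hz => Rle_trans _ _ _ (H1 z hz) H3) (fun z hz => Rlt_le_trans _ _ _ H4 (H2 z hz)))).
  - apply (proj1 (quantile_bounds F t y y (fun z hz => Rle_trans _ _ _ (H1 z hz) H3) (fun z hz => Rlt_le_trans _ _ _ H4 (H2 z hz)))).
Qed.

Lemma quantile_eq F t u : t <= u -> (forall z, F z < t \/ u < F z) -> quantile F t = quantile F u.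
Proof. intros Htu H. unfold quantile. apply Rsup_ext. intros z. split; intros Hz. lra.
  destruct (H z); lra. Qed.

Lemma quantile_far F t y D : 0 < D -> (exists z, F z <= t) -> (exists M, forall z, M <= z -> t < F z) ->
  (forall z w, z <= w -> F z <= F w) -> (forall z, y - D < z < y + D -> F z = F (y - D)) ->
  y + D <= quantile F t \/ quantile F t <= y - D.
Proof. intros HD Hne Hb Hmono Hc. destruct (quantile_lub F t Hne Hb) as [Hub Hleast].
  destruct (Rle_dec (F (y - D)) t) as [Hv|Hv].
  - left. destruct (Rle_dec (y+D) (quantile F t)); auto. exfalso.
    set (z := (quantile F t + y + D)/2).
    assert (F z <= t).
    { destruct (Rle_dec z (y - D)). pose proof (Hmono z (y-D) r). lra. rewrite Hc. auto. unfold z in *; lra. }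
    assert (z <= quantile F t) by (apply Hub; auto). unfold z in *; lra.
  - right. apply Hleast. intros z Hz. destruct (Rle_dec z (y - D)); auto. exfalso.
    destruct (Rlt_dec z (y + D)). rewrite Hc in Hz by lra. lra.
    assert (F y <= F z) by (apply Hmono; lra). rewrite Hc in H by lra. lra.
Qed.

Fixpoint ss (n : nat) (p : nat -> R) : list R :=
  match n with O => 0 :: nil | S m => ss m p ++ map (fun s => s + p m) (ss m p) end.

Lemma disc_in_ss n x p z : In (disc_cdf n x p z) (ss n p).
Proof. induction n; simpl. left; reflexivity. unfold disc_cdf in *. simpl. apply in_or_app.
  destruct (Rle_dec (x n) z). right. apply in_map_iff. eexists; split; [reflexivity|auto].
  left. rewrite Rplus_0_r. auto. Qed.

Lemma disc_mono n x p z w : (forall i, (i<n)%nat -> 0 <= p i) -> z <= w -> disc_cdf n x p z <= disc_cdf n x p w.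
Proof. intros Hp Hzw. unfold disc_cdf. apply sumR_le. intros i Hi.
  destruct (Rle_dec (x i) z); destruct (Rle_dec (x i) w); try lra. pose proof (Hp i Hi); lra. Qed.

Lemma disc_zero n x p z : (forall i, (i<n)%nat -> z < x i) -> disc_cdf n x p z = 0.
Proof. intros H. unfold disc_cdf. rewrite (sumR_ext _ _ (fun _ => 0)). rewrite sumR_const; lra.
  intros i Hi. destruct (Rle_dec (x i) z); auto. pose proof (H i Hi); lra. Qed.

Lemma disc_one n x p z : sumR n p = 1 -> (forall i, (i<n)%nat -> x i <= z) -> disc_cdf n x p z = 1.
Proof. intros Hs H. unfold disc_cdf. rewrite <- Hs. apply sumR_ext. intros i Hi.
  destruct (Rle_dec (x i) z); auto. pose proof (H i Hi); lra. Qed.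

Lemma disc_const n x p y D : (forall i, (i<n)%nat -> ~ (y - D < x i < y + D)) ->
  forall z, y - D < z < y + D -> disc_cdf n x p z = disc_cdf n x p (y - D).
Proof. intros H z Hz. unfold disc_cdf. apply sumR_ext. intros i Hi. pose proof (H i Hi).
  destruct (Rle_dec (x i) z); destruct (Rle_dec (x i) (y - D)); auto; exfalso.
  apply H0; lra. lra. Qed.

Lemma disc_facts n x p t : in_Pi n p -> 0 < t < 1 ->
  let Z := sumR n (fun i => Rabs (x i)) in
  (forall z, z < - Z -> disc_cdf n x p z <= t) /\ (forall z, Z <= z -> t < disc_cdf n x p z) /\
  (exists z, disc_cdf n x p z <= t) /\ (exists M, forall z, M <= z -> t < disc_cdf n x p z) /\
  Rabs (quantile (disc_cdf n x p) t) <= Z.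
Proof. intros [Hp Hs] Ht Z.
  assert (Hx : forall i, (i<n)%nat -> Rabs (x i) <= Z).
  { intros i Hi. unfold Z. apply (sumR_term n (fun i => Rabs (x i))); auto. intros; apply Rabs_pos. }
  assert (H1 : forall z, z < - Z -> disc_cdf n x p z <= t).
  { intros z Hz. rewrite disc_zero. lra. intros i Hi. pose proof (Hx i Hi).
    unfold Rabs in *. destruct (Rcase_abs (x i)); lra. }
  assert (H2 : forall z, Z <= z -> t < disc_cdf n x p z).
  { intros z Hz. rewrite disc_one; auto. lra. intros i Hi. pose proof (Hx i Hi).
    unfold Rabs in *. destruct (Rcase_abs (x i)); lra. }
  split; auto. split; auto. split. exists (- Z - 1). apply H1; lra. split. eauto.
  assert (Hq : - Z <= quantile (disc_cdf n x p) t <= Z) by (apply quantile_bounds; auto).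
  unfold Rabs; destruct (Rcase_abs (quantile (disc_cdf n x p) t)); lra.
Qed.

Definition Lb (N : nat -> nat) (j : nat) : nat := (2 * N (S j))%nat.
Fixpoint Pb (N : nat -> nat) (j : nat) : nat := match j with O => O | S j => (Pb N j + Lb N j)%nat end.
Fixpoint st (N : nat -> nat) (k : nat) : nat * nat :=
  match k with O => (O,O) | S k => let (j,i) := st N k in if Nat.ltb (S i) (Lb N j) then (j, S i) else (S j, O) end.
Definition blk N k := fst (st N k).

Lemma st_S N k : st N (S k) = let (j,i) := st N k in if Nat.ltb (S i) (Lb N j) then (j, S i) else (S j, O).
Proof. reflexivity. Qed.

Lemma st_spec N : (forall j, (1 <= Lb N j)%nat) -> forall j i, (i < Lb N j)%nat -> st N (Pb N j + i) = (j, i).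
Proof. intros HL. induction j; induction i; intros Hi.
  - reflexivity.
  - rewrite Nat.add_succ_r. rewrite st_S, IHi by lia. replace (Nat.ltb (S i) (Lb N 0)) with true. auto.
    symmetry; apply Nat.ltb_lt; lia.
  - change (Pb N (S j)) with (Pb N j + Lb N j)%nat. replace (Pb N j + Lb N j + 0)%nat with (S (Pb N j + (Lb N j - 1)))%nat by (pose proof (HL j); lia).
    rewrite st_S, IHj by (pose proof (HL j); lia). replace (Nat.ltb (S (Lb N j - 1)) (Lb N j)) with false. auto.
    symmetry; apply Nat.ltb_ge; pose proof (HL j); lia.
  - rewrite Nat.add_succ_r. rewrite st_S, IHi by lia. replace (Nat.ltb (S i) (Lb N (S j))) with true. auto.
    symmetry; apply Nat.ltb_lt; lia.
Qed.

Lemma blk_spec N : (forall j, (1 <= Lb N j)%nat) -> forall j i, (i < Lb N j)%nat -> blk N (Pb N j + i) = j.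
Proof. intros. unfold blk. rewrite st_spec; auto. Qed.

Lemma Pb_ge N : (forall j, (1 <= Lb N j)%nat) -> forall j, (j <= Pb N j)%nat.
Proof. intros HL; induction j; simpl; auto. pose proof (HL j); lia. Qed.

Lemma block_sum N (g : nat -> R) : (forall j, (1 <= Lb N j)%nat) -> forall J,
  sumR (Pb N J) (fun k => g (blk N k)) = sumR J (fun j => INR (Lb N j) * g j).
Proof. intros HL. induction J; simpl; auto. rewrite sumR_split, IHJ.
  rewrite (sumR_ext (Lb N J) _ (fun _ => g J)). rewrite sumR_const; auto.
  intros i Hi. rewrite blk_spec; auto. Qed.

Definition rho (N : nat -> nat) (j : nat) : R := (/4) ^ (S j) / INR (N (S j)).
Definition Dk (B : R) (k : nat) : R := B * 3 ^ k.
Definition yk (B : R) (k : nat) : R := 3 * Dk B k.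
Definition q (r B : R) (N : nat -> nat) (k : nat) : R := rho N (blk N k) * rpow B r / rpow (Dk B k) r.
Definition C r B N (k : nat) : R := sumR k (q r B N).
Definition Ssup r B N : R := Rsup (fun s => exists k, s = C r B N k).
Definition ell r B N : R := 1 - Ssup r B N.
Definition ind r B N (z : R) (k : nat) : R := if Rle_dec (yk B k) z then q r B N k else 0.
Definition Fm r B N (z : R) : R :=
  (if Rle_dec 0 z then ell r B N else 0) + sumR (Z.to_nat (up z)) (ind r B N z).
Definition e r B N (k : nat) : R := match k with O => 0 | S k => ell r B N + C r B N k end.

Definition goodN (N : nat -> nat) := forall j, (1 <= N (S j))%nat.

Lemma Lb_ge N : goodN N -> forall j, (1 <= Lb N j)%nat.
Proof. intros H j. unfold Lb. pose proof (H j). lia. Qed.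

Lemma pow3_ge k : INR k + 1 <= 3 ^ k.
Proof. induction k. simpl; lra. rewrite S_INR. simpl. pose proof (pos_INR k). lra. Qed.
Lemma pow3_pos k : 1 <= 3 ^ k.
Proof. pose proof (pow3_ge k); pose proof (pos_INR k); lra. Qed.

Lemma Dk_pos B k : 1 <= B -> 0 < Dk B k.
Proof. intros. unfold Dk. pose proof (pow3_pos k). nra. Qed.
Lemma Dk_ge B k : 1 <= B -> B <= Dk B k.
Proof. intros. unfold Dk. pose proof (pow3_pos k). nra. Qed.
Lemma Dk_S B k : Dk B (S k) = 3 * Dk B k.
Proof. unfold Dk. simpl. ring. Qed.
Lemma Dk_mono B k l : 1 <= B -> (k <= l)%nat -> Dk B k <= Dk B l.
Proof. intros HB H. induction H. lra. rewrite Dk_S. pose proof (Dk_pos B m HB). lra. Qed.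
Lemma yk_gt B k : 1 <= B -> INR k < yk B k.
Proof. intros. unfold yk, Dk. pose proof (pow3_ge k). pose proof (pos_INR k). nra. Qed.
Lemma yk_pos B k : 1 <= B -> 0 < yk B k.
Proof. intros. unfold yk. pose proof (Dk_pos B k H). lra. Qed.
Lemma yk_mono B k l : 1 <= B -> (k <= l)%nat -> yk B k <= yk B l.
Proof. intros. unfold yk. pose proof (Dk_mono B k l H H0). lra. Qed.

Lemma rho_pos N j : goodN N -> 0 < rho N j.
Proof. intros H. unfold rho. apply Rdiv_lt_0_compat. apply pow_lt; lra. apply lt_0_INR. pose proof (H j); lia. Qed.


Lemma q_pos r B N k : 1 <= B -> goodN N -> 0 < q r B N k.
Proof. intros. unfold q. apply Rdiv_lt_0_compat. apply Rmult_lt_0_compat. apply rho_pos; auto.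
  apply rpow_gt0; lra. apply rpow_gt0. apply Dk_pos; auto. Qed.
Lemma q_le r B N k : 1 <= r -> 1 <= B -> goodN N -> q r B N k <= rho N (blk N k).
Proof. intros. unfold q. assert (rpow B r <= rpow (Dk B k) r) by (apply rpow_le; [lra| split; [lra| apply Dk_ge; auto]]).
  assert (0 < rpow (Dk B k) r) by (apply rpow_gt0; apply Dk_pos; auto). pose proof (rho_pos N (blk N k) H1).
  unfold Rdiv. rewrite Rmult_assoc. rewrite <- (Rmult_1_r (rho N (blk N k))) at 2.
  apply Rmult_le_compat_l. lra. apply (Rmult_le_reg_r (rpow (Dk B k) r)); auto. rewrite Rmult_assoc, Rinv_l; lra. Qed.
Lemma q_D r B N k : 1 <= B -> q r B N k * rpow (Dk B k) r = rho N (blk N k) * rpow B r.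
Proof. intros. unfold q. assert (0 < rpow (Dk B k) r) by (apply rpow_gt0; apply Dk_pos; auto). field. lra. Qed.
Lemma q_y r B N k : 1 <= B -> q r B N k * rpow (yk B k) r = rpow 3 r * (rho N (blk N k) * rpow B r).
Proof. intros. unfold yk. rewrite rpow_mult. rewrite <- q_D; auto. ring. lra. apply Dk_pos; auto. Qed.

Lemma geom_sum J : sumR J (fun j => 2 * (/4)^(S j)) = 2/3 * (1 - (/4)^J).
Proof. induction J. simpl; lra. change (sumR (S J) ?f) with (sumR J f + f J). rewrite IHJ. simpl. field. Qed.

Lemma rho_sum N : goodN N -> forall K, sumR K (fun k => rho N (blk N k)) <= 2/3.
Proof. intros HN K. pose proof (Lb_ge N HN) as HL.
  apply Rle_trans with (sumR (Pb N K) (fun k => rho N (blk N k))).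
  apply sumR_mono. apply Pb_ge; auto. intros; left; apply rho_pos; auto.
  rewrite block_sum by auto. rewrite (sumR_ext _ _ (fun j => 2 * (/4)^(S j))). rewrite geom_sum.
  assert (0 <= (/4)^K) by (apply pow_le; lra). lra.
  intros j _. unfold Lb, rho. rewrite mult_INR. simpl (INR 2). assert (0 < INR (N (S j))) by (apply lt_0_INR; pose proof (HN j); lia).
  field. lra. Qed.

Lemma C_le r B N k : 1 <= r -> 1 <= B -> goodN N -> C r B N k <= 2/3.
Proof. intros. unfold C. apply Rle_trans with (sumR k (fun k => rho N (blk N k))). apply sumR_le; intros; apply q_le; auto.
  apply rho_sum; auto. Qed.
Lemma C_S r B N k : C r B N (S k) = C r B N k + q r B N k.
Proof. reflexivity. Qed.
Lemma C_mono r B N k l : 1 <= B -> goodN N -> (k <= l)%nat -> C r B N k <= C r B N l.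
Proof. intros. unfold C. apply sumR_mono; auto. intros; left; apply q_pos; auto. Qed.
Lemma C_ge0 r B N k : 1 <= B -> goodN N -> 0 <= C r B N k.
Proof. intros. apply (C_mono r B N 0 k); auto. lia. Qed.
Lemma mom_sum r B N K : 1 <= r -> 1 <= B -> goodN N ->
  sumR K (fun k => q r B N k * rpow (yk B k) r) <= rpow 3 r * rpow B r * (2/3).
Proof. intros. rewrite (sumR_ext _ _ (fun k => (rpow 3 r * rpow B r) * rho N (blk N k))).
  rewrite sumR_scal. pose proof (rho_sum N H1 K). assert (0 <= rpow 3 r * rpow B r) by (pose proof (rpow_ge0 3 r); pose proof (rpow_ge0 B r); nra). nra.
  intros. rewrite q_y; auto. ring. Qed.

Lemma S_lub r B N : 1 <= r -> 1 <= B -> goodN N -> is_lub (fun s => exists k, s = C r B N k) (Ssup r B N).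
Proof. intros. apply Rsup_lub. exists (2/3). intros s [k ->]. apply C_le; auto. exists (C r B N 0). eauto. Qed.
Lemma C_lt_S r B N k : 1 <= r -> 1 <= B -> goodN N -> C r B N k < Ssup r B N.
Proof. intros. destruct (S_lub r B N H H0 H1) as [Hub _]. assert (C r B N (S k) <= Ssup r B N) by (apply Hub; eauto).
  rewrite C_S in H2. pose proof (q_pos r B N k H0 H1). lra. Qed.
Lemma S_le r B N : 1 <= r -> 1 <= B -> goodN N -> Ssup r B N <= 2/3.
Proof. intros. destruct (S_lub r B N H H0 H1) as [_ Hl]. apply Hl. intros s [k ->]. apply C_le; auto. Qed.
Lemma S_approx r B N eps : 1 <= r -> 1 <= B -> goodN N -> 0 < eps -> exists k, Ssup r B N - eps < C r B N k.
Proof. intros. destruct (S_lub r B N H H0 H1) as [_ Hl].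
  destruct (classic (exists k, Ssup r B N - eps < C r B N k)) as [Hc|Hc]; auto. exfalso.
  assert (Ssup r B N <= Ssup r B N - eps). { apply Hl. intros s [k ->]. destruct (Rle_dec (C r B N k) (Ssup r B N - eps)); auto.
    exfalso; apply Hc; exists k; lra. } lra. Qed.

Lemma ell_pos r B N : 1 <= r -> 1 <= B -> goodN N -> 1/3 <= ell r B N.
Proof. intros. unfold ell. pose proof (S_le r B N H H0 H1). lra. Qed.

Lemma ellC_lt1 r B N k : 1 <= r -> 1 <= B -> goodN N -> ell r B N + C r B N k < 1.
Proof. intros. unfold ell. pose proof (C_lt_S r B N k H H0 H1). lra. Qed.

Lemma ellC_approx r B N b : 1 <= r -> 1 <= B -> goodN N -> b < 1 -> exists K, b < ell r B N + C r B N K.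
Proof. intros. destruct (S_approx r B N (1 - b) H H0 H1) as [k Hk]. lra. exists k. unfold ell. lra. Qed.

Lemma sum_good r B N z M1 M2 : 1 <= B -> (forall k, (M1 <= k)%nat -> z < yk B k) -> (M1 <= M2)%nat ->
  sumR M2 (ind r B N z) = sumR M1 (ind r B N z).
Proof. intros HB H Hle. replace M2 with (M1 + (M2 - M1))%nat by lia. rewrite sumR_split.
  rewrite (sumR_ext (M2 - M1) _ (fun _ => 0)). rewrite sumR_const. lra.
  intros i Hi. unfold ind. destruct (Rle_dec (yk B (M1 + i)) z); auto. assert (z < yk B (M1+i)%nat) by (apply H; lia). lra. Qed.

Lemma Nz_good B z k : 1 <= B -> (Z.to_nat (up z) <= k)%nat -> z < yk B k.
Proof. intros HB Hk. pose proof (yk_gt B k HB). destruct (archimed z) as [H1 H2].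
  destruct (Z_le_gt_dec (up z) 0).
  - assert (IZR (up z) <= 0) by (apply IZR_le; auto). pose proof (pos_INR k). lra.
  - assert (INR (Z.to_nat (up z)) <= INR k) by (apply le_INR; auto).
    rewrite INR_IZR_INZ, Z2Nat.id in H0 by lia. lra. Qed.

Lemma Fm_N r B N z M : 1 <= B -> (forall k, (M <= k)%nat -> z < yk B k) ->
  Fm r B N z = (if Rle_dec 0 z then ell r B N else 0) + sumR M (ind r B N z).
Proof. intros HB H. unfold Fm. f_equal.
  rewrite <- (sum_good r B N z (Z.to_nat (up z)) (Nat.max M (Z.to_nat (up z)))); auto; [|intros; apply Nz_good; auto|lia].
  apply sum_good; auto. lia. Qed.

Lemma Fm_neg r B N z : 1 <= B -> z < 0 -> Fm r B N z = 0.
Proof. intros HB Hz. rewrite (Fm_N r B N z 0); auto. destruct (Rle_dec 0 z); [lra|]. simpl; lra.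
  intros k _. pose proof (yk_pos B k HB). lra. Qed.

Lemma ind_le r B N z k : 1 <= B -> goodN N -> 0 <= ind r B N z k <= q r B N k.
Proof. intros. unfold ind. pose proof (q_pos r B N k H H0). destruct (Rle_dec (yk B k) z); lra. Qed.

Lemma Fm_below r B N z k : 1 <= r -> 1 <= B -> goodN N -> z < yk B k -> Fm r B N z <= ell r B N + C r B N k.
Proof. intros Hr HB HN Hz. destruct (Nat.le_gt_cases k (Z.to_nat (up z))) as [Hk|Hk].
 2:{ rewrite (Fm_N r B N z k); auto. 2:{ intros l hl. apply Rlt_le_trans with (1:=Hz). apply yk_mono; auto. }
     assert (sumR k (ind r B N z) <= C r B N k) by (apply sumR_le; intros; apply ind_le; auto).
     pose proof (ell_pos r B N Hr HB HN). destruct (Rle_dec 0 z); lra. }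
 rewrite (Fm_N r B N z (k + Z.to_nat (up z))); auto.
 2:{ intros l hl; apply Nz_good; auto; lia. }
 rewrite sumR_split. rewrite (sumR_ext (Z.to_nat (up z)) _ (fun _ => 0)). rewrite sumR_const.
 assert (sumR k (ind r B N z) <= C r B N k) by (apply sumR_le; intros; apply ind_le; auto).
 pose proof (ell_pos r B N Hr HB HN). destruct (Rle_dec 0 z); lra.
 intros i _. unfold ind. destruct (Rle_dec (yk B (k+i)) z); auto. assert (yk B k <= yk B (k+i)%nat) by (apply yk_mono; auto; lia). lra.
Qed.

Lemma Fm_above r B N z k : 1 <= r -> 1 <= B -> goodN N -> yk B k <= z -> ell r B N + C r B N (S k) <= Fm r B N z.
Proof. intros Hr HB HN Hz. pose proof (yk_pos B k HB).
 rewrite (Fm_N r B N z (S k + Z.to_nat (up z))); auto.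
 2:{ intros l hl; apply Nz_good; auto; lia. }
 destruct (Rle_dec 0 z); [|lra]. rewrite sumR_split.
 assert (0 <= sumR (Z.to_nat (up z)) (fun i => ind r B N z (S k + i))) by (apply sumR_nonneg; intros; apply ind_le; auto).
 assert (sumR (S k) (ind r B N z) = C r B N (S k)).
 { unfold C. apply sumR_ext. intros i Hi. unfold ind. destruct (Rle_dec (yk B i) z); auto.
   assert (yk B i <= yk B k) by (apply yk_mono; auto; lia). lra. }
 lra. Qed.

Lemma Fm_nonneg_ell r B N z : 1 <= r -> 1 <= B -> goodN N -> 0 <= z -> ell r B N <= Fm r B N z.
Proof. intros. unfold Fm. destruct (Rle_dec 0 z); [|lra].
 assert (0 <= sumR (Z.to_nat (up z)) (ind r B N z)) by (apply sumR_nonneg; intros; apply ind_le; auto). lra. Qed.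

Lemma sum_ind_val r B N z : 1 <= B -> goodN N -> forall M, exists m, sumR M (ind r B N z) = C r B N m.
Proof. intros HB HN. induction M. exists 0%nat; reflexivity.
 destruct (Rle_dec (yk B M) z).
 - exists (S M). change (sumR (S M) (ind r B N z)) with (sumR M (ind r B N z) + ind r B N z M).
   unfold C; simpl. f_equal. apply sumR_ext. intros i Hi. unfold ind. destruct (Rle_dec (yk B i) z); auto.
   assert (yk B i <= yk B M) by (apply yk_mono; auto; lia). lra. unfold ind. destruct (Rle_dec (yk B M) z); [auto|lra].
 - destruct IHM as [m Hm]. exists m. change (sumR (S M) (ind r B N z)) with (sumR M (ind r B N z) + ind r B N z M).
   unfold ind at 2. destruct (Rle_dec (yk B M) z); [lra|]. lra. Qed.

Lemma Fm_val r B N z : 1 <= B -> goodN N -> 0 <= z -> exists m, Fm r B N z = ell r B N + C r B N m.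
Proof. intros. destruct (sum_ind_val r B N z H H0 (Z.to_nat (up z))) as [m Hm]. exists m. unfold Fm.
 destruct (Rle_dec 0 z); [|lra]. rewrite Hm; auto. Qed.

Lemma Fm_mono r B N z w : 1 <= r -> 1 <= B -> goodN N -> z <= w -> Fm r B N z <= Fm r B N w.
Proof. intros Hr HB HN Hzw. rewrite (Fm_N r B N z (Z.to_nat (up w))); auto.
 2:{ intros k hk. pose proof (Nz_good B w k HB hk). lra. }
 unfold Fm. apply Rplus_le_compat. 
 - assert (0 <= ell r B N) by (pose proof (ell_pos r B N Hr HB HN); lra).
   destruct (Rle_dec 0 z); destruct (Rle_dec 0 w); lra.
 - apply sumR_le. intros i _. unfold ind. pose proof (q_pos r B N i HB HN).
   destruct (Rle_dec (yk B i) z); destruct (Rle_dec (yk B i) w); lra.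
Qed.

Lemma gap_exists B x N : exists d, 0 < d /\ forall k, (k < N)%nat -> yk B k <= x \/ x + d <= yk B k.
Proof. induction N. exists 1; split; [lra| intros; lia].
  destruct IHN as [d [Hd H]]. destruct (Rle_dec (yk B N) x).
  - exists d; split; auto. intros k Hk. destruct (Nat.eq_dec k N). subst; auto. apply H; lia.
  - exists (Rmin d (yk B N - x)). split. apply Rmin_pos; lra. intros k Hk.
    destruct (Nat.eq_dec k N). subst. right. pose proof (Rmin_r d (yk B N - x)). lra.
    destruct (H k ltac:(lia)). auto. right. pose proof (Rmin_l d (yk B N - x)). lra.
Qed.

Lemma Fm_cdf r B N : 1 <= r -> 1 <= B -> goodN N -> is_cdf (Fm r B N).
Proof. intros Hr HB HN. split; [|split; [|split]].
  - intros; apply Fm_mono; auto.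
  - intros x eps Heps. set (M := Z.to_nat (up (x+1))). destruct (gap_exists B x M) as [d0 [Hd0 Hg]].
    set (dx := if Rlt_dec x 0 then - x else 1).
    assert (Hdx : 0 < dx) by (unfold dx; destruct (Rlt_dec x 0); lra).
    exists (Rmin d0 (Rmin 1 dx)). split. apply Rmin_pos; auto. apply Rmin_pos; lra.
    intros y Hxy Hy. pose proof (Rmin_l d0 (Rmin 1 dx)). pose proof (Rmin_r d0 (Rmin 1 dx)).
    pose proof (Rmin_l 1 dx). pose proof (Rmin_r 1 dx).
    assert (Hgood : forall z, z <= x + 1 -> forall k, (M <= k)%nat -> z < yk B k).
    { intros z Hz k Hk. pose proof (Nz_good B (x+1) k HB Hk). lra. }
    rewrite (Fm_N r B N y M), (Fm_N r B N x M); auto; try (apply Hgood; lra).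
    assert (Hb : (if Rle_dec 0 y then ell r B N else 0) = (if Rle_dec 0 x then ell r B N else 0)).
    { unfold dx in *. destruct (Rlt_dec x 0); destruct (Rle_dec 0 y); destruct (Rle_dec 0 x); auto; lra. }
    assert (Hs : sumR M (ind r B N y) = sumR M (ind r B N x)).
    { apply sumR_ext. intros k Hk. unfold ind. destruct (Hg k Hk);
      destruct (Rle_dec (yk B k) y); destruct (Rle_dec (yk B k) x); auto; lra. }
    rewrite Hb, Hs. lra.
  - intros eps Heps. exists (-1). intros x Hx. rewrite Fm_neg; auto; lra.
  - intros eps Heps. destruct (S_approx r B N eps Hr HB HN Heps) as [k Hk]. exists (yk B k). intros x Hx.
    pose proof (Fm_above r B N x k Hr HB HN Hx). rewrite C_S in H. pose proof (q_pos r B N k HB HN).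
    unfold ell in *. lra.
Qed.

Definition Yp B (k : nat) : R := match k with O => 0 | S k => yk B k end.

Lemma e_mono r B N k : 1 <= r -> 1 <= B -> goodN N -> e r B N k <= e r B N (S k).
Proof. intros. destruct k; simpl. pose proof (ell_pos r B N H H0 H1). unfold C; simpl; lra.
  rewrite C_S. pose proof (q_pos r B N k H0 H1). lra. Qed.

Lemma QF_piece r B N k t : 1 <= r -> 1 <= B -> goodN N -> e r B N k < t < e r B N (S k) ->
  quantile (Fm r B N) t = Yp B k.
Proof. intros Hr HB HN Ht. destruct k; simpl in *.
  - apply (quantile_piece _ _ _ 0 (ell r B N)). intros z hz. rewrite Fm_neg; auto; lra.
    intros z hz. apply Fm_nonneg_ell; auto. lra. unfold C in Ht; simpl in Ht; lra.
  - apply (quantile_piece _ _ _ (ell r B N + C r B N k) (ell r B N + C r B N (S k))).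
    intros z hz. apply Fm_below; auto. intros z hz. apply Fm_above; auto. lra. lra.
Qed.

Lemma Yp_nonneg B k : 1 <= B -> 0 <= Yp B k.
Proof. intros. destruct k; simpl. lra. pose proof (yk_pos B k H); lra. Qed.

Lemma e_approx r B N b : 1 <= r -> 1 <= B -> goodN N -> b < 1 -> exists K, b <= e r B N K.
Proof. intros. destruct (ellC_approx r B N b H H0 H1 H2) as [K HK]. exists (S K). simpl. lra. Qed.

Lemma e_pos r B N k : 1 <= r -> 1 <= B -> goodN N -> 0 <= e r B N k < 1.
Proof. intros. destruct k; simpl. lra. pose proof (ell_pos r B N H H0 H1). pose proof (C_ge0 r B N k H0 H1).
  pose proof (ellC_lt1 r B N k H H0 H1). lra. Qed.

Lemma Wsum r B N K : 1 <= r -> 1 <= B -> goodN N ->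
  sumR K (fun k => rpow (Yp B k) r * (e r B N (S k) - e r B N k)) <= rpow 3 r * rpow B r * (2/3).
Proof. intros. destruct K. simpl. pose proof (rpow_ge0 3 r); pose proof (rpow_ge0 B r). nra.
  rewrite sumR_shift. simpl Yp. unfold rpow at 1. destruct (Rle_dec 0 0); [|lra].
  rewrite (sumR_ext _ _ (fun k => q r B N k * rpow (yk B k) r)). pose proof (mom_sum r B N K H H0 H1). lra.
  intros i _. simpl. rewrite C_S. ring. Qed.

Lemma sub_int f a b a' b' : Riemann_integrable f a b -> a <= a' -> a' <= b' -> b' <= b -> Riemann_integrable f a' b'.
Proof. intros pr H1 H2 H3. apply RiemannInt_P22 with b. apply RiemannInt_P23 with a. auto. lra. lra. Qed.

Lemma e_mono2 r B N k l : 1 <= r -> 1 <= B -> goodN N -> (k <= l)%nat -> e r B N k <= e r B N l.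
Proof. intros. induction H2. lra. pose proof (e_mono r B N m H H0 H1). lra. Qed.

Lemma telesc (f : nat -> R) K : sumR K (fun k => f (S k) - f k) = f K - f 0%nat.
Proof. induction K; simpl. lra. rewrite IHK. lra. Qed.

Lemma in_Pr_Fm r B N : 1 <= r -> 1 <= B -> goodN N -> in_Pr r (Fm r B N).
Proof. intros Hr HB HN. split. apply Fm_cdf; auto.
  exists (rpow 3 r * rpow B r * (2/3)). intros J [a [b [pr [Ha [Hab [Hb HJ]]]]]]. subst J.
  destruct (e_approx r B N b Hr HB HN Hb) as [K HK].
  eapply Rle_trans. apply (int_upper _ (e r B N) (fun k => rpow (Yp B k) r)) with (K := K).
  - intros; apply e_mono; auto.
  - intros; apply rpow_ge0.
  - simpl; lra.
  - auto.
  - auto.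
  - intros. apply (sub_int _ a b); auto.
  - intros k Hk t Ht Hab'. rewrite (QF_piece r B N k t); auto. rewrite Rabs_right. lra.
    pose proof (Yp_nonneg B k HB). lra.
  - apply Wsum; auto.
Qed.

Definition hfun r B N n x p t := rpow (Rabs (quantile (disc_cdf n x p) t - quantile (Fm r B N) t)) r.

Lemma h_int r B N n x p : 1 <= r -> 1 <= B -> goodN N -> in_Pi n p ->
  forall a b, 0 < a -> a <= b -> b < 1 -> Riemann_integrable (hfun r B N n x p) a b.
Proof. intros Hr HB HN Hp a b Ha Hab Hb. destruct (constructive_indefinite_description _ (e_approx r B N b Hr HB HN Hb)) as [K HK].
  apply (step_int _ (ss n p ++ map (e r B N) (seq 0 (S K)))); auto.
  intros t u Ht Htu Hu Hout. unfold hfun. f_equal. f_equal. f_equal.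
  - apply quantile_eq. lra. intros z. apply Hout. apply in_or_app. left. apply disc_in_ss.
  - apply quantile_eq. lra. intros z. destruct (Rlt_dec z 0).
    + rewrite Fm_neg by auto. apply (Hout 0). apply in_or_app; right. apply in_map_iff. exists 0%nat. split. reflexivity.
      apply in_seq. lia.
    + destruct (Fm_val r B N z HB HN ltac:(lra)) as [m Hm]. rewrite Hm.
      destruct (le_lt_dec (S m) K).
      * apply Hout. apply in_or_app; right. apply in_map_iff. exists (S m). split. reflexivity. apply in_seq. lia.
      * right. pose proof (e_mono2 r B N K (S m) Hr HB HN ltac:(lia)). simpl in H. lra.
Qed.

Lemma h_upper r B N n x p : 1 <= r -> 1 <= B -> goodN N -> in_Pi n p ->
  forall J, int01_set (hfun r B N n x p) J ->
  J <= Rpower 2 r * (rpow (sumR n (fun i => Rabs (x i))) r + rpow 3 r * rpow B r * (2/3)).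
Proof. intros Hr HB HN Hp J [a [b [pr [Ha [Hab [Hb HJ]]]]]]. subst J.
  set (Z := sumR n (fun i => Rabs (x i))).
  assert (HZ : 0 <= Z) by (apply sumR_nonneg; intros; apply Rabs_pos).
  destruct (e_approx r B N b Hr HB HN Hb) as [K HK].
  assert (K2 : 0 < Rpower 2 r) by (unfold Rpower; apply exp_pos).
  eapply Rle_trans. apply (int_upper _ (e r B N) (fun k => Rpower 2 r * (rpow Z r + rpow (Yp B k) r))) with (K := K).
  - intros; apply e_mono; auto.
  - intros; pose proof (rpow_ge0 Z r); pose proof (rpow_ge0 (Yp B k) r). nra.
  - simpl; lra.
  - auto.
  - auto.
  - intros. apply (sub_int _ a b); auto.
  - intros k Hk t Ht Hab'. unfold hfun. rewrite (QF_piece r B N k t); auto.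
    destruct (disc_facts n x p t Hp ltac:(lra)) as [_ [_ [_ [_ Hq]]]]. fold Z in Hq.
    pose proof (Yp_nonneg B k HB).
    eapply Rle_trans. apply rpow_le with (y := Z + Yp B k). lra. split. apply Rabs_pos.
    eapply Rle_trans. apply Rabs_triang. rewrite Rabs_Ropp, (Rabs_right (Yp B k)) by lra. lra.
    apply rpow_add; lra.
  - rewrite (sumR_ext _ _ (fun k => Rpower 2 r * rpow Z r * (e r B N (S k) - e r B N k) +
       Rpower 2 r * (rpow (Yp B k) r * (e r B N (S k) - e r B N k)))).
    rewrite sumR_plus, !sumR_scal, telesc. pose proof (Wsum r B N K Hr HB HN).
    pose proof (e_pos r B N K Hr HB HN). simpl (e r B N 0). pose proof (rpow_ge0 Z r).
    assert (0 <= Rpower 2 r * rpow Z r) by nra.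
    assert (Rpower 2 r * rpow Z r * (e r B N K - 0) <= Rpower 2 r * rpow Z r) by nra.
    assert (Rpower 2 r * sumR K (fun k => rpow (Yp B k) r * (e r B N (S k) - e r B N k)) <= Rpower 2 r * (rpow 3 r * rpow B r * (2/3))) by nra.
    nra.
    intros; ring.
Qed.

Definition indb B (z : R) (k : nat) : R :=
  if Rlt_dec (2 * Dk B k) z then if Rlt_dec z (4 * Dk B k) then 1 else 0 else 0.

Lemma indb_01 B z k : 0 <= indb B z k <= 1.
Proof. unfold indb. destruct (Rlt_dec _ _); [destruct (Rlt_dec _ _)|]; lra. Qed.

Lemma indb_disj B z P L : 1 <= B -> sumR L (fun i => indb B z (P + i)) <= 1.
Proof. intros HB. induction L. simpl; lra.
  change (sumR (S L) ?f) with (sumR L f + f L).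
  unfold indb at 2. destruct (Rlt_dec (2 * Dk B (P+L)) z) as [H1|H1]; [destruct (Rlt_dec z (4 * Dk B (P+L)))|]; try lra.
  rewrite (sumR_ext _ _ (fun _ => 0)). rewrite sumR_const. lra.
  intros i Hi. unfold indb. destruct (Rlt_dec (2 * Dk B (P+i)) z); [|auto]. destruct (Rlt_dec z (4 * Dk B (P + i))); auto.
  exfalso. assert (Dk B (S (P+i)) <= Dk B (P+L)) by (apply Dk_mono; auto; lia). rewrite Dk_S in H.
  pose proof (Dk_pos B (P+i) HB). lra.
Qed.

Definition unserved B n (x : nat -> R) k := forall m, (m < n)%nat -> ~ (2 * Dk B k < x m < 4 * Dk B k).
Definition uind B n x k : R := if excluded_middle_informative (unserved B n x k) then 1 else 0.

Lemma served_le B n x k : 1 - uind B n x k <= sumR n (fun m => indb B (x m) k).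
Proof. unfold uind. destruct (excluded_middle_informative (unserved B n x k)) as [H|H].
  - assert (0 <= sumR n (fun m => indb B (x m) k)) by (apply sumR_nonneg; intros; apply indb_01). lra.
  - destruct (classic (exists m, (m < n)%nat /\ 2 * Dk B k < x m < 4 * Dk B k)) as [[m [Hm Hb]]|Hn].
    + assert (indb B (x m) k <= sumR n (fun m => indb B (x m) k)) by (apply (sumR_term n (fun m => indb B (x m) k)); auto; intros; apply indb_01).
      assert (indb B (x m) k = 1) by (unfold indb; destruct (Rlt_dec (2 * Dk B k) (x m)); destruct (Rlt_dec (x m) (4*Dk B k)); lra).
      lra.
    + exfalso. apply H. intros m Hm Hb. apply Hn. eauto.
Qed.

Lemma count_unserved B n x P L : 1 <= B -> INR L - INR n <= sumR L (fun i => uind B n x (P + i)).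
Proof. intros HB.
  assert (sumR L (fun i => 1 - uind B n x (P+i)) <= INR n).
  { eapply Rle_trans. apply sumR_le. intros i _. apply served_le.
    rewrite <- sumR_swap. rewrite <- (Rmult_1_r (INR n)). rewrite <- sumR_const.
    apply sumR_le. intros m _. apply indb_disj; auto. }
  rewrite sumR_minus, sumR_const in H. lra.
Qed.

Lemma lower_main r B N n j x p : 1 <= r -> 1 <= B -> goodN N -> in_Pi n p -> (n < N (S j))%nat ->
  exists J, int01_set (hfun r B N n x p) J /\ rpow B r * (/4)^(S j) <= J.
Proof. intros Hr HB HN Hp Hn.
  set (P := Pb N j). set (L := Lb N j). set (c := fun k => e r B N (S k)).
  assert (Hc0 : forall k, 0 < c k < 1).
  { intros k. unfold c. simpl. pose proof (ell_pos r B N Hr HB HN). pose proof (C_ge0 r B N k HB HN).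
    pose proof (ellC_lt1 r B N k Hr HB HN). lra. }
  assert (Hcm : forall k l, (k <= l)%nat -> c k <= c l) by (intros; unfold c; apply e_mono2; auto; lia).
  assert (pr : Riemann_integrable (hfun r B N n x p) (c P) (c (P+L)%nat)).
  { apply h_int; auto. apply Hc0. apply Hcm; lia. apply Hc0. }
  exists (RiemannInt pr). split.
  { exists (c P), (c (P+L)%nat), pr. split. apply Hc0. split. apply Hcm; lia. split. apply Hc0. auto. }
  set (U := fun i => if excluded_middle_informative (unserved B n x (P+i)) then rpow (Dk B (P+i)) r else 0).
  apply Rle_trans with (sumR L (fun i => U i * (c (P+i+1)%nat - c (P+i)%nat))).
  - rewrite (sumR_ext _ _ (fun i => rho N j * rpow B r * uind B n x (P+i))).
    rewrite sumR_scal. pose proof (count_unserved B n x P L HB).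
    assert (HL : INR L = 2 * INR (N (S j))) by (unfold L, Lb; rewrite mult_INR; reflexivity).
    assert (INR n <= INR (N (S j))) by (apply le_INR; lia).
    assert (Hrho : rho N j * INR (N (S j)) = (/4)^(S j)).
    { unfold rho. assert (0 < INR (N (S j))) by (apply lt_0_INR; pose proof (HN j); lia). field. lra. }
    assert (0 < rho N j * rpow B r) by (apply Rmult_lt_0_compat; [apply rho_pos; auto| apply rpow_gt0; lra]).
    assert (rho N j * rpow B r * INR (N (S j)) <= rho N j * rpow B r * sumR L (fun i => uind B n x (P + i))) by nra.
    replace (rpow B r * (/4)^(S j)) with (rho N j * rpow B r * INR (N (S j))) by (rewrite <- Hrho; ring). lra.
    intros i Hi. unfold U, uind. unfold c. replace (S (P+i+1)) with (S (S (P+i))) by lia. simpl.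
    rewrite C_S. destruct (excluded_middle_informative (unserved B n x (P+i))).
    + replace (ell r B N + (C r B N (P + i) + q r B N (P + i)) - (ell r B N + C r B N (P + i))) with (q r B N (P+i)) by ring.
      rewrite Rmult_comm, q_D by auto. unfold P. rewrite blk_spec; auto. ring. apply Lb_ge; auto.
    + ring.
  - apply (int_lower _ c U P).
    + intros k. apply Hcm; lia.
    + intros a' b' H1 H2 H3. apply h_int; auto. pose proof (Hc0 P); lra. pose proof (Hc0 (P+L)%nat); lra.
    + intros i Hi t Ht. unfold U. destruct (excluded_middle_informative (unserved B n x (P+i))) as [Hu|Hu]; [|apply rpow_ge0].
      assert (Ht' : e r B N (S (P+i)) < t < e r B N (S (S (P+i)))).
      { unfold c in Ht. replace (S (P+i+1)) with (S (S (P+i))) in Ht by lia. auto. }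
      assert (H01 : 0 < t < 1) by (pose proof (Hc0 (P+i)%nat); pose proof (Hc0 (P+i+1)%nat); unfold c in *; lra).
      unfold hfun. rewrite (QF_piece r B N (S (P+i)) t Hr HB HN Ht'). simpl Yp.
      destruct (disc_facts n x p t Hp H01) as [_ [_ [He [Hm _]]]].
      assert (HD := Dk_pos B (P+i) HB).
      assert (Hfar := quantile_far (disc_cdf n x p) t (yk B (P+i)) (Dk B (P+i)) HD He Hm
        (fun z w Hzw => disc_mono n x p z w (proj1 Hp) Hzw)).
      apply rpow_le. lra. split. lra.
      assert (yk B (P+i) + Dk B (P+i) <= quantile (disc_cdf n x p) t \/ quantile (disc_cdf n x p) t <= yk B (P+i) - Dk B (P+i)).
      { apply Hfar. apply disc_const. intros m Hm' Hb. apply (Hu m Hm'). unfold yk in Hb. lra. }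
      unfold Rabs. destruct (Rcase_abs _); lra.
    + reflexivity.
Qed.

Fixpoint mkN (g : nat -> nat) (j : nat) : nat := match j with O => O | S j => Nat.max (S (mkN g j)) (g j) end.

Lemma find_block (N : nat -> nat) : N 0%nat = 0%nat -> (forall j, (N j < N (S j))%nat) ->
  forall n, exists j, (N j <= n < N (S j))%nat.
Proof. intros H0 Hs. induction n. exists 0%nat. rewrite H0. pose proof (Hs 0%nat). lia.
  destruct IHn as [j Hj]. destruct (le_lt_dec (N (S j)) (S n)). exists (S j). pose proof (Hs (S j)). lia.
  exists j. lia. Qed.

Lemma cv_bound (a : nat -> R) : Un_cv a 0 -> exists B, 1 <= B /\ forall m, Rabs (a m) <= B / 4.
Proof. intros Hcv. destruct (Hcv 1 ltac:(lra)) as [N0 HN0].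
  exists (4 * (1 + sumR N0 (fun i => Rabs (a i)))).
  assert (0 <= sumR N0 (fun i => Rabs (a i))) by (apply sumR_nonneg; intros; apply Rabs_pos).
  split. lra. intros m. destruct (le_lt_dec N0 m).
  - pose proof (HN0 m l). unfold R_dist in H0. rewrite Rminus_0_r in H0. lra.
  - assert (Rabs (a m) <= sumR N0 (fun i => Rabs (a i))) by (apply (sumR_term N0 (fun i => Rabs (a i))); auto; intros; apply Rabs_pos).
    lra.
Qed.

Theorem theorem5p12 :
  forall (r : R) (a : nat -> R),
    1 <= r ->
    (forall n, (1 <= n)%nat -> 0 <= a n) ->
    Un_cv a 0 ->
    exists F : R -> R,
      in_Pr r F /\
      forall n : nat, (1 <= n)%nat ->
        forall x p : nat -> R, in_Xi n x -> in_Pi n p ->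
          a n <= d_r r (disc_cdf n x p) F.
Proof.
  intros r a Hr Ha Hcv.
  destruct (cv_bound a Hcv) as [B [HB HBa]].
  assert (Hj : forall j, exists M, forall m, (M <= m)%nat -> Rabs (a m) < B * (/4)^(S (S j))).
  { intros j. assert (0 < B * (/4)^(S (S j))) by (apply Rmult_lt_0_compat; [lra| apply pow_lt; lra]).
    destruct (Hcv _ H) as [M HM]. exists M. intros m Hm. pose proof (HM m Hm). unfold R_dist in H0.
    rewrite Rminus_0_r in H0. auto. }
  set (g := fun j => proj1_sig (constructive_indefinite_description _ (Hj j))).
  assert (Hg : forall j m, (g j <= m)%nat -> Rabs (a m) < B * (/4)^(S (S j))).
  { intros j. unfold g. destruct (constructive_indefinite_description _ (Hj j)). simpl. auto. }
  set (N := mkN g).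
  assert (HN0 : N 0%nat = 0%nat) by reflexivity.
  assert (HNs : forall j, (N j < N (S j))%nat).
  { intros j. unfold N. change (mkN g (S j)) with (Nat.max (S (mkN g j)) (g j)). lia. }
  assert (HgN : goodN N) by (intros j; pose proof (HNs j); lia).
  assert (HaN : forall j m, (N j <= m)%nat -> a m <= B * (/4)^(S j)).
  { intros j m Hm. destruct j.
    - pose proof (HBa m). simpl. pose proof (Rle_abs (a m)). lra.
    - assert ((g j <= m)%nat) by (unfold N in Hm; change (mkN g (S j)) with (Nat.max (S (mkN g j)) (g j)) in Hm; lia). pose proof (Hg j m H).
      pose proof (Rle_abs (a m)). lra. }
  exists (Fm r B N). split. apply in_Pr_Fm; auto.
  intros n Hn x p Hx Hp.
  destruct (find_block N HN0 HNs n) as [j Hjn].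
  pose proof (HaN j n (proj1 Hjn)) as Han.
  destruct (lower_main r B N n j x p Hr HB HgN Hp (proj2 Hjn)) as [J0 [HJ0 HJ0b]].
  pose proof (Ha n Hn) as Ha0.
  unfold d_r. destruct (Req_dec (a n) 0) as [Hz|Hz]. rewrite Hz. apply rpow_ge0.
  assert (Hpos : 0 < a n) by lra.
  assert (Hlub : is_lub (int01_set (hfun r B N n x p)) (int01 (hfun r B N n x p))).
  { apply Rsup_lub. exists (Rpower 2 r * (rpow (sumR n (fun i => Rabs (x i))) r + rpow 3 r * rpow B r * (2/3))).
    intros J HJ. apply (h_upper r B N n x p); auto. eauto. }
  assert (HI : J0 <= int01 (hfun r B N n x p)) by (apply (proj1 Hlub); auto).
  assert (Hu : 0 <= (/4)^(S j) <= 1).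
  { split. apply pow_le; lra. rewrite <- (pow1 (S j)). apply pow_incr. lra. }
  assert (Har : rpow (a n) r <= rpow B r * (/4)^(S j)).
  { eapply Rle_trans. apply rpow_le with (y := B * (/4)^(S j)). lra. lra.
    rewrite rpow_mult by (try lra; apply pow_lt; lra). pose proof (rpow_le_self _ r Hu Hr).
    pose proof (rpow_ge0 B r). nra. }
  rewrite <- (rpow_inv (a n) r) by lra. apply rpow_le.
  left; apply Rinv_0_lt_compat; lra. split. apply rpow_ge0.
  change (fun t => rpow (Rabs (quantile (disc_cdf n x p) t - quantile (Fm r B N) t)) r) with (hfun r B N n x p).
  lra.
Qed.
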